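(* Let $(\mathsf{L}, \models)$ be a self-complementary logic on graphs for which there exists a class $\mathcal{F}$ of simple graphs such that any two simple graphs $G$ and $H$ are homomorphism indistinguishable over $\mathcal{F}$ if and only if they are $\mathsf{L}$-equivalent. Then there exists a minor-closed class $\mathcal{F}'$ of simple graphs such that any two simple graphs $G$ and $H$ are homomorphism indistinguishable over $\mathcal{F}'$ if and only if they are $\mathsf{L}$-equivalent.
   Context: All graphs are finite, undirected, without multiple edges; a simple graph is one without loops. A homomorphism $F \to G$ is a map $h\colon V(F)\to V(G)$ with $h(u)h(v)\in E(G)$ whenever $uv \in E(F)$, and looped vertices mapped to looped vertices; $\hom(F,G)$ is the number of homomorphisms. For a graph class $\mathcal{F}$, $G$ and $H$ are homomorphism indistinguishable over $\mathcal{F}$ (written $G \equiv_{\mathcal{F}} H$) if $\hom(F,G)=\hom(F,H)$ for all $F\in\mathcal{F}$. A logic on graphs is a pair $(\mathsf{L},\models)$ of a class $\mathsf{L}$ of sentences and a relation $\models$ between graphs and sentences that is isomorphism-invariant ($G\cong H$ implies $G\models\phi \iff H\models\phi$ for all $\phi\in\mathsf{L}$). Graphs $G,H$ are $\mathsf{L}$-equivalent if $G\models\phi \iff H\models \phi$ for all $\phi\in\mathsf{L}$. The logic is self-complementary if for every $\phi\in\mathsf{L}$ there is $\overline{\phi}\in\mathsf{L}$ such that for all simple graphs $G$, $G\models\phi$ iff $\overline{G}\models\overline{\phi}$, where $\overline{G}$ is the complement graph (same vertex set, edges exactly the non-edges between distinct vertices). A minor of a simple graph $F$ is a subgraph of a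 graph obtained from $F$ by contracting edges; a class is minor-closed if it contains all minors of its members. *)

(* Defs.v *)
From mathcomp Require Import all_boot.
Set Implicit Arguments. Unset Strict Implicit. Unset Printing Implicit Defensive.

(* A finite undirected graph without multiple edges; loops allowed
   (a loop at v is  gE v v). *)
Record graph := Graph {
  gV :> finType;
  gE : rel gV;
  gE_sym : symmetric gE }.

Definition simple (G : graph) : Prop := forall v : G, ~~ gE v v.

Definition homb (F G : graph) (h : {ffun F -> G}) : bool :=
  [forall u : F, forall v : F, gE u v ==> gE (h u) (h v)].

Definition hom (F G : graph) : nat := #|[pred h : {ffun F -> G} | homb h]|.

Definition iso (G H : graph) : Prop :=
  exists f : G -> H, bijective f /\ forall x y : G, gE x y = gE (f x) (f y).

Lemma compl_sym (G : graph) :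
  symmetric (fun x y : G => (x != y) && ~~ gE x y).
Proof. by move=> x y; rewrite eq_sym gE_sym. Qed.

Definition compl (G : graph) : graph :=
  @Graph G (fun x y : G => (x != y) && ~~ gE x y) (@compl_sym G).

Definition iso_invariant (L : Type) (models : graph -> L -> Prop) : Prop :=
  forall G H : graph, iso G H -> forall phi : L, models G phi <-> models H phi.

Definition self_complementary (L : Type) (models : graph -> L -> Prop) : Prop :=
  forall phi : L, exists phibar : L,
    forall G : graph, simple G -> (models G phi <-> models (compl G) phibar).

Definition L_equiv (L : Type) (models : graph -> L -> Prop) (G H : graph) : Prop :=
  forall phi : L, models G phi <-> models H phi.

Definition hom_indist (C : graph -> Prop) (G H : graph) : Prop :=
  forall F : graph, C F -> hom F G = hom F H.

(* Minors via minor models (branch sets): F' is a minor of F iff there is a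
   partial map phi : V(F) -> option V(F') whose fibres over V(F') (branch sets)
   are nonempty and induce connected subgraphs of F, and such that every edge
   of F' is realised by an edge of F between the corresponding branch sets.
   This is exactly "isomorphic to a subgraph of a graph obtained from F by
   contracting edges". *)
Definition branch (F F' : graph) (phi : F -> option F') (v : F') : pred F :=
  [pred x | phi x == Some v].

Definition is_minor (F' F : graph) : Prop :=
  exists phi : F -> option F',
    (forall v : F', exists x : F, phi x == Some v) /\
    (forall (v : F') (x y : F), phi x == Some v -> phi y == Some v ->
        connect [rel a b | [&& gE a b, phi a == Some v & phi b == Some v]] x y) /\
    (forall v w : F', gE v w ->
        exists x y : F, [&& phi x == Some v, phi y == Some w & gE x y]).

Definition minor_closed (C : graph -> Prop) : Prop :=
  forall F F' : graph, C F -> simple F' -> is_minor F' F -> C F'.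

(* Main.v *)
From mathcomp Require Import all_boot all_algebra.
From mathcomp Require Import zify.
From Stdlib Require Import ClassicalEpsilon Classical.
Require Import Defs.
Set Implicit Arguments. Unset Strict Implicit. Unset Printing Implicit Defensive.
Import GRing.Theory Num.Theory.


Lemma pg_sym (G K : graph) :
  symmetric (fun p q : (gV G * gV K)%type => gE p.1 q.1 && gE p.2 q.2).
Proof. by move=> p q; rewrite gE_sym [gE p.2 _]gE_sym. Qed.
Definition pg (G K : graph) : graph := @Graph (gV G * gV K)%type _ (@pg_sym G K).

Lemma Kn_sym n : symmetric (fun x y : 'I_n => x != y).
Proof. by move=> x y; rewrite eq_sym. Qed.
Definition Kn n : graph := @Graph 'I_n _ (@Kn_sym n).

Lemma pg_simple G K : simple G -> simple (pg G K).
Proof. by move=> sG [x a] /=; rewrite (negbTE (sG x)). Qed.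
Lemma Kn_simple n : simple (Kn n).
Proof. by move=> x /=; rewrite eqxx. Qed.
Lemma compl_simple G : simple (compl G).
Proof. by move=> x /=; rewrite eqxx. Qed.

Section Cnt.
Variable X : finType.
Implicit Types A B : {set X * X}.

Definition okA (G : graph) A (h : {ffun X -> G}) := [forall p in A, h p.1 == h p.2].
Definition okB (G : graph) B (h : {ffun X -> G}) := [forall p in B, gE (h p.1) (h p.2)].
Definition cset (G : graph) A B := [set h : {ffun X -> G} | okA A h && okB B h].
Definition cnt A B (G : graph) := #|cset G A B|.

Definition pairf (G K : graph) (hh : {ffun X -> G} * {ffun X -> K}) : {ffun X -> pg G K} :=
  [ffun x => (hh.1 x, hh.2 x)].

Lemma pairf_inj G K : injective (@pairf G K).
Proof.
move=> [h1 h2] [k1 k2] /ffunP E; congr pair; apply/ffunP => x;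
by have := E x; rewrite !ffunE => -[].
Qed.

Lemma cnt_mul A B G K : cnt A B (pg G K) = cnt A B G * cnt A B K.
Proof.
rewrite /cnt -cardsX -(card_imset _ (@pairf_inj G K)).
suff -> : cset (pg G K) A B = (@pairf G K) @: setX (cset G A B) (cset K A B) by [].
apply/setP => h; rewrite !inE; apply/idP/imsetP.
  move=> /andP[hA hB].
  exists ([ffun x => (h x).1], [ffun x => (h x).2]).
    rewrite !inE /okA /okB; apply/andP; split; apply/andP; split.
    - apply/forall_inP => p /(forall_inP hA); rewrite !ffunE.
      by move/eqP=> ->.
    - apply/forall_inP => p /(forall_inP hB); rewrite !ffunE /=.
      by case/andP.
    - apply/forall_inP => p /(forall_inP hA); rewrite !ffunE.
      by move/eqP=> ->.
    - apply/forall_inP => p /(forall_inP hB); rewrite !ffunE /=.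
      by case/andP.
  by apply/ffunP => x; rewrite !ffunE; case: (h x).
move=> [[h1 h2]]; rewrite !inE /okA /okB => /andP[/andP[a1 b1] /andP[a2 b2]] ->.
apply/andP; split; apply/forall_inP => p pA; rewrite !ffunE /=.
  by rewrite xpair_eqE (forall_inP a1 p pA) (forall_inP a2 p pA).
by rewrite (forall_inP b1 p pA) (forall_inP b2 p pA).
Qed.

End Cnt.


Definition Eall (F : graph) : {set F * F} := [set p | gE p.1 p.2].

Lemma hom_cnt (F G : graph) : hom F G = cnt set0 (Eall F) G.
Proof.
rewrite /hom /cnt; apply: eq_card => h; rewrite !inE /okA /okB /homb.
have -> : [forall p in set0, h p.1 == h p.2] by apply/forall_inP => p; rewrite inE.
apply/forallP/forall_inP => /=.
  by move=> H p; rewrite inE => Hp; have := forallP (H p.1) p.2; rewrite Hp.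
by move=> H u; apply/forallP => v; apply/implyP => uv; apply: (H (u, v)); rewrite inE.
Qed.

Lemma hom_mul (F G K : graph) : hom F (pg G K) = hom F G * hom F K.
Proof. by rewrite !hom_cnt cnt_mul. Qed.

Lemma compl_compl_iso (G : graph) : simple G -> iso G (compl (compl G)).
Proof.
move=> sG; exists id; split; first by exists id.
move=> x y /=; case: (eqVneq x y) => [->|xy] /=; first by rewrite (negbTE (sG y)).
by rewrite negbK.
Qed.

Lemma Lequiv_compl L (models : graph -> L -> Prop) (G H : graph) :
  iso_invariant models -> self_complementary models -> simple G -> simple H ->
  L_equiv models G H -> L_equiv models (compl G) (compl H).
Proof.
move=> Hinv Hsc sG sH E phi; have [psi Hpsi] := Hsc phi.
have eG : models (compl G) phi <-> models G psi.
  exact: iff_trans (Hpsi (compl G) (@compl_simple G)) (iff_sym (Hinv _ _ (compl_compl_iso sG) psi)).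
have eH : models (compl H) phi <-> models H psi.
  exact: iff_trans (Hpsi (compl H) (@compl_simple H)) (iff_sym (Hinv _ _ (compl_compl_iso sH) psi)).
split => [/eG /(E psi) /eH // | /eH /(E psi) /eG //].
Qed.

Lemma hom_indist_pg C (G H K : graph) : hom_indist C G H -> hom_indist C (pg G K) (pg H K).
Proof. by move=> E F CF; rewrite !hom_mul (E F CF). Qed.


Section PartC.
Local Open Scope ring_scope.

Definition pdec (Q : Prop) : bool := if excluded_middle_informative Q then true else false.
Lemma pdecP (Q : Prop) : reflect Q (pdec Q).
Proof. by rewrite /pdec; case: excluded_middle_informative => q; constructor. Qed.

Section Artin.
Variables (I : finType) (P : pred I) (psi : I -> graph -> int).
Hypothesis psi_mul : forall i (G K : graph), simple G -> simple K ->
  psi i (pg G K) = psi i G * psi i K.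

Definition same i j : bool := pdec (forall K, simple K -> psi i K = psi j K).

Lemma artin_gen (i0 : I) (n : nat) (a : I -> int) :
  (#|[pred i | P i && (a i != 0) && ~~ same i i0]| <= n)%N ->
  (forall K, simple K -> \sum_(i | P i) a i * psi i K = 0) ->
  P i0 -> (exists K, simple K /\ psi i0 K != 0) ->
  \sum_(i | P i && same i i0) a i = 0.
Proof.
elim: n a => [|n IH] a Hn Ha Pi0 [K0 [sK0 nz0]].
  have Hall : forall i, P i -> a i != 0 -> same i i0.
    move=> i Pi ai; apply/negPn/negP => ns.
    have : (0 < #|[pred i | P i && (a i != 0) && ~~ same i i0]|)%N.
      by apply/card_gt0P; exists i; rewrite inE Pi ai ns.
    by rewrite leqn0 in Hn; rewrite (eqP Hn).
  have := Ha K0 sK0; rewrite (bigID (fun i => same i i0)) /=.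
  rewrite [X in _ + X]big1; last first.
    move=> i /andP[Pi ns]; case: (eqVneq (a i) 0) => [->|ai]; first by rewrite mul0r.
    by rewrite (Hall i Pi ai) in ns.
  rewrite addr0 (eq_bigr (fun i => a i * psi i0 K0)); last first.
    by move=> i /andP[_ /pdecP s]; rewrite s.
  by rewrite -mulr_suml => /eqP; rewrite mulf_eq0 (negbTE nz0) orbF => /eqP.
case: (pickP [pred i | P i && (a i != 0) && ~~ same i i0]) => [j|Hnone]; last first.
  apply: (IH a _ Ha Pi0); first by rewrite (eq_card0 Hnone).
  by exists K0.
rewrite inE => /andP[/andP[Pj aj] /pdecP nsj].
have [x [sx xne]] : exists x, simple x /\ psi j x != psi i0 x.
  apply: NNPP => H; apply: nsj => K sK; apply: NNPP => ne; apply: H; exists K; split => //.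
  exact/eqP.
pose a' i := a i * (psi i x - psi j x).
have Ha' : forall K, simple K -> \sum_(i | P i) a' i * psi i K = 0.
  move=> K sK.
  have e1 : \sum_(i | P i) a' i * psi i K =
     \sum_(i | P i) a i * psi i (pg x K) - psi j x * \sum_(i | P i) a i * psi i K.
    rewrite mulr_sumr -sumrB; apply: eq_bigr => i _.
    by rewrite psi_mul // /a' mulrBr mulrBl !mulrA [psi j x * a i]mulrC.
  by rewrite e1 (Ha K sK) (Ha _ (@pg_simple x K sx)) mulr0 subr0.
have Hn' : (#|[pred i | P i && (a' i != 0) && ~~ same i i0]| <= n)%N.
  rewrite -ltnS; apply: leq_trans Hn; apply: proper_card; apply/properP; split.
    apply/subsetP => i; rewrite !inE /a' mulf_eq0 negb_or => /andP[/andP[-> /andP[-> _]] ->].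
    by [].
  exists j; first by rewrite inE Pj aj; apply/negP => /pdecP.
  by rewrite inE /a' subrr mulr0 eqxx andbF.
have := IH a' Hn' Ha' Pi0 (ex_intro _ K0 (conj sK0 nz0)).
rewrite (eq_bigr (fun i => a i * (psi i0 x - psi j x))); last first.
  by move=> i /andP[_ /pdecP s]; rewrite /a' s.
rewrite -mulr_suml => /eqP; rewrite mulf_eq0 subr_eq0 [psi i0 x == _]eq_sym (negbTE xne) orbF.
by move/eqP.
Qed.

Lemma artin (a : I -> int) :
  (forall K, simple K -> \sum_(i | P i) a i * psi i K = 0) ->
  forall i0, P i0 -> (exists K, simple K /\ psi i0 K != 0) ->
  \sum_(i | P i && same i i0) a i = 0.
Proof. by move=> Ha i0; apply: (@artin_gen i0 #|I| a) => //; apply: max_card. Qed.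

End Artin.

End PartC.


Section PartD.
Local Open Scope ring_scope.

Definition ind (b : bool) : int := (b : nat)%:R.

Lemma ind_and a b : ind (a && b) = ind a * ind b.
Proof. by case: a; case: b; rewrite /ind /= ?mulr1 ?mulr0 ?mul0r. Qed.

Lemma ind_forall (T : finType) (D : {set T}) (c : pred T) :
  ind [forall x in D, c x] = \prod_(x in D) ind (c x).
Proof.
case: (boolP [forall x in D, c x]) => H.
  by rewrite big1 // => x xD; rewrite (forall_inP H x xD).
have [x xD ncx] := forall_inPn H.
by rewrite (bigD1 x) //= (negbTE ncx) /ind mul0r.
Qed.

Lemma card_ind (T : finType) (S : {set T}) : (#|S|%:R : int) = \sum_x ind (x \in S).
Proof.
rewrite -sum1_card natr_sum big_mkcond /=; apply: eq_bigr => x _.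
by rewrite /ind; case: (x \in S).
Qed.

Lemma forall_setU (T : finType) (D1 D2 : {set T}) (c : pred T) :
  [forall x in D1 :|: D2, c x] = [forall x in D1, c x] && [forall x in D2, c x].
Proof.
apply/forall_inP/andP => [H|[H1 H2] x].
  by split; apply/forall_inP => x xD; apply: H; rewrite inE xD ?orbT.
by rewrite inE => /orP[] xD; [exact: (forall_inP H1) | exact: (forall_inP H2)].
Qed.

Section Expand.
Variable X : finType.
Implicit Types A B : {set X * X}.

Definition Pt (t : {ffun X * X -> 'I_3}) B := [set p in B | nat_of_ord (t p) == 1%N].
Definition Qt (t : {ffun X * X -> 'I_3}) B := [set p in B | nat_of_ord (t p) == 2%N].

Definition Fj (G : graph) (h : {ffun X -> G}) (p : X * X) (j : 'I_3) : int :=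
  if nat_of_ord j == 0%N then 1 else if nat_of_ord j == 1%N then - ind (h p.1 == h p.2)
  else - ind (gE (h p.1) (h p.2)).

Lemma sum_Fj (G : graph) (h : {ffun X -> G}) p :
  \sum_(j < 3) Fj h p j = 1 - ind (h p.1 == h p.2) - ind (gE (h p.1) (h p.2)).
Proof. by rewrite !big_ord_recr big_ord0 /= /Fj /= add0r. Qed.

Lemma prod_Fj (G : graph) (h : {ffun X -> G}) B (t : {ffun X * X -> 'I_3}) :
  \prod_(p in B) Fj h p (t p) =
  (-1) ^+ (#|Pt t B| + #|Qt t B|) *
   (\prod_(p in Pt t B) ind (h p.1 == h p.2) * \prod_(p in Qt t B) ind (gE (h p.1) (h p.2))).
Proof.
rewrite (bigID (fun p => nat_of_ord (t p) == 0%N)) /= big1; last first.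
  by move=> p /andP[_ /eqP e]; rewrite /Fj e.
rewrite mul1r (bigID (fun p => nat_of_ord (t p) == 1%N)) /=.
rewrite (eq_bigl (fun p => p \in Pt t B)); last first.
  move=> p; rewrite inE; case: (p \in B) => //=.
  by case: (t p) => -[|[|[|]]].
rewrite [X in _ * X](eq_bigl (fun p => p \in Qt t B)); last first.
  move=> p; rewrite inE; case: (p \in B) => //=; case: (t p) => -[|[|[|]]] //.
rewrite (eq_bigr (fun p => - ind (h p.1 == h p.2))); last first.
  by move=> p; rewrite inE /Fj => /andP[_ /eqP ->].
rewrite [X in _ * X](eq_bigr (fun p => - ind (gE (h p.1) (h p.2)))); last first.
  by move=> p; rewrite inE /Fj => /andP[_ /eqP ->].
by rewrite !prodrN exprD; rewrite -!mulrA; congr (_ * _); rewrite mulrCA.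
Qed.

Lemma cnt_compl A B (G : graph) : simple G ->
  ((cnt A B (compl G))%:R : int) =
  \sum_(t in pffun_on ord0 (fun p => p \in B) predT)
     (-1) ^+ (#|Pt t B| + #|Qt t B|) * (cnt (A :|: Pt t B) (Qt t B) G)%:R.
Proof.
move=> sG; rewrite /cnt card_ind.
transitivity (\sum_(h : {ffun X -> G}) ind (okA A h) *
                 \prod_(p in B) \sum_(j < 3) Fj h p j).
  apply: eq_bigr => h _; rewrite inE ind_and /okB ind_forall; congr (_ * _).
  apply: eq_bigr => p _; rewrite sum_Fj /=.
  case: (eqVneq (h p.1) (h p.2)) => [->|ne] /=.
    by rewrite (negbTE (sG _)) /ind /= subr0 subrr.
  by rewrite /ind /= subr0; case: (gE _ _) => /=; rewrite ?subr0 ?subrr.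
under eq_bigr do rewrite (big_distr_big ord0) mulr_sumr.
rewrite exchange_big /=; apply: eq_bigr => t _.
rewrite card_ind mulr_sumr; apply: eq_bigr => h _.
rewrite prod_Fj mulrCA; congr (_ * _).
by rewrite inE ind_and /okA forall_setU ind_and /okB !ind_forall mulrA.
Qed.

End Expand.

End PartD.


Lemma card_sumb (T : finType) (S : {set T}) : #|S| = \sum_x (x \in S : nat).
Proof. by rewrite -sum1_card big_mkcond; apply: eq_bigr => x _; case: (x \in S). Qed.

Section Counting.
Variable X : finType.
Implicit Types A B Q : {set X * X}.

Definition rA A : rel X := fun x y => ((x, y) \in A) || ((y, x) \in A).
Lemma rA_sym A : symmetric (rA A).
Proof. by move=> x y; rewrite /rA orbC. Qed.
Definition conn A := connect (rA A).
Lemma conn_sym A x y : conn A x y = conn A y x.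
Proof. exact: (sym_connect_sym (@rA_sym A)). Qed.

Lemma conn0 A x : conn A x x.
Proof. exact: connect0. Qed.

Lemma conn_edge A p : p \in A -> conn A p.1 p.2.
Proof. by case: p => x y pA; apply: connect1; rewrite /rA pA. Qed.

Lemma conn_trans A x y z : conn A x y -> conn A y z -> conn A x z.
Proof. exact: connect_trans. Qed.

Lemma conn_class A p x : p \in A -> conn A x p.1 = conn A x p.2.
Proof.
move=> pA; apply/idP/idP => c; apply: conn_trans c _; first exact: conn_edge.
by rewrite conn_sym; exact: conn_edge.
Qed.

Lemma okA_conn (G : graph) A (h : {ffun X -> G}) : okA A h ->
  forall x y, conn A x y -> h x = h y.
Proof.
move=> hA x y /connectP[p pth ->]; elim: p x pth => //= z p IH x /andP[xz pth].
rewrite -(IH z pth); case/orP: xz => E.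
  by apply/eqP; exact: (forall_inP hA _ E).
by apply/esym/eqP; exact: (forall_inP hA _ E).
Qed.

Lemma okB0 (G : graph) (h : {ffun X -> G}) : okB set0 h.
Proof. by apply/forall_inP => p; rewrite inE. Qed.

Lemma okA_U1 (G : graph) q A (h : {ffun X -> G}) :
  okA (q |: A) h = (h q.1 == h q.2) && okA A h.
Proof.
rewrite /okA forall_setU; congr (_ && _); apply/forall_inP/idP => [H|H p].
  by apply: H; rewrite inE.
by rewrite inE => /eqP ->.
Qed.

Lemma cnt_mono (G : graph) A A' B B' : A \subset A' -> B \subset B' ->
  (cnt A' B' G <= cnt A B G)%N.
Proof.
move=> sA sB; apply: subset_leq_card; apply/subsetP => h; rewrite !inE.
case/andP => hA hB; apply/andP; split.
  by apply/forall_inP => p pA; apply: (forall_inP hA); exact: (subsetP sA).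
by apply/forall_inP => p pB; apply: (forall_inP hB); exact: (subsetP sB).
Qed.

Lemma cnt_pos n A : (0 < n)%N -> (0 < cnt A set0 (Kn n))%N.
Proof.
move=> n0; apply/card_gt0P; exists [ffun _ => (Ordinal n0 : Kn n)].
by rewrite inE okB0 andbT; apply/forall_inP => p _; rewrite !ffunE.
Qed.

Lemma cnt_loop n A Q q : q \in Q -> conn A q.1 q.2 -> cnt A Q (Kn n) = 0%N.
Proof.
move=> qQ c; apply/eqP; rewrite cards_eq0; apply/eqP/setP => h; rewrite !inE.
apply/negP => /andP[hA hB]; have := forall_inP hB q qQ; rewrite /= (okA_conn hA c).
by rewrite eqxx.
Qed.

Lemma cnt_cross (G : graph) A u v : ~~ conn A u v ->
  (cnt ((u, v) |: A) set0 G * #|G|)%N = cnt A set0 G.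
Proof.
move=> nc; rewrite /cnt -cardsT -cardsX.
pose gam (ha : {ffun X -> G} * G) : {ffun X -> G} :=
  [ffun x => if conn A v x then ha.2 else ha.1 x].
have nvu : ~~ conn A v u by rewrite conn_sym.
rewrite -(@card_in_imset _ _ gam); last first.
  move=> [h1 a1] [h2 a2]; rewrite !inE /= !andbT !okA_U1 /=.
  rewrite !okB0 !andbT => /andP[/eqP e1 hA1] /andP[/eqP e2 hA2] /ffunP E.
  have ea : a1 = a2 by have := E v; rewrite !ffunE conn0.
  congr pair => //; apply/ffunP => x; have := E x; rewrite !ffunE.
  case: ifP => // cx _.
  have -> : h1 x = h1 u.
    by rewrite e1; apply: (okA_conn hA1); rewrite conn_sym.
  have -> : h2 x = h2 u.
    by rewrite e2; apply: (okA_conn hA2); rewrite conn_sym.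
  by have := E u; rewrite !ffunE (negbTE nvu).
apply: eq_card => h; rewrite [in RHS]inE okB0 andbT; apply/imsetP/idP.
  move=> [[h' a]]; rewrite !inE okB0 !andbT okA_U1 /= => /andP[_ hA] ->.
  apply/forall_inP => p pA; rewrite !ffunE.
  have e : conn A v p.1 = conn A v p.2 by exact: conn_class.
  by rewrite e; case: ifP => //; rewrite (forall_inP hA p pA).
move=> hA; exists ([ffun x => if conn A v x then h u else h x], h v).
  rewrite !inE okB0 andbT okA_U1 /= !ffunE (negbTE nvu) conn0 eqxx /= andbT.
  apply/forall_inP => p pA; rewrite !ffunE.
  have e : conn A v p.1 = conn A v p.2 by exact: conn_class.
  by rewrite e; case: ifP => //; rewrite (forall_inP hA p pA).
apply/ffunP => x; rewrite /gam !ffunE /=.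
case: (boolP (conn A v x)) => c; rewrite ?c ?(negbTE c) //.
by apply: (okA_conn hA); rewrite conn_sym.
Qed.

Lemma union_bound n A Q :
  (cnt A set0 (Kn n) <= cnt A Q (Kn n) + \sum_(q in Q) cnt (q |: A) set0 (Kn n))%N.
Proof.
rewrite /cnt !card_sumb.
under [X in (_ <= _ + X)%N]eq_bigr => q _ do rewrite card_sumb.
rewrite exchange_big /= -big_split /=; apply: leq_sum => h _.
rewrite !inE okB0 andbT; case hA: (@okA _ (Kn n) A h) => //=.
case hQ: (@okB _ (Kn n) Q h) => //=.
have [q qQ nq] := forall_inPn (negbT hQ).
rewrite add0n (bigD1 q) //= !inE okB0 okA_U1 hA /= andbT.
by move: nq; rewrite /= negbK => ->.
Qed.

Lemma bk (b : bool) k : (b <= k)%N -> (b + b * (k - b))%N = (b * k)%N.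
Proof. case: b => //= H; rewrite !mul1n; lia. Qed.

Lemma bonferroni n A Q :
  (cnt A Q (Kn n) + \sum_(q in Q) cnt (q |: A) set0 (Kn n) <=
   cnt A set0 (Kn n) + \sum_(q in Q) \sum_(q' in Q | q' != q) cnt (q |: (q' |: A)) set0 (Kn n))%N.
Proof.
rewrite /cnt !card_sumb.
under [X in (_ + X <= _)%N]eq_bigr => q _ do rewrite card_sumb.
under [X in (_ <= _ + X)%N]eq_bigr => q _ do (under eq_bigr => q' _ do rewrite card_sumb).
rewrite [X in (_ + X <= _)%N]exchange_big /=.
under [X in (_ <= _ + X)%N]eq_bigr => q _ do rewrite exchange_big /=.
rewrite [X in (_ <= _ + X)%N]exchange_big /= -!big_split /=; apply: leq_sum => h _.
rewrite !inE !okB0 /=.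
rewrite andbT.
under eq_bigr => q _ do rewrite inE okB0 andbT okA_U1.
under [X in (_ <= _ + X)%N]eq_bigr => q _ do (under eq_bigr => q' _ do rewrite inE okB0 andbT !okA_U1).
case hA: (@okA _ (Kn n) A h); last first.
  by rewrite /= big1 // => q _; rewrite andbF.
rewrite /=.
set m := fun q : X * X => h q.1 == h q.2.
have E1 : \sum_(q in Q) ((h q.1 == h q.2) && true : nat) = \sum_(q in Q) (m q : nat).
  by apply: eq_bigr => q _; rewrite andbT.
set k := \sum_(q in Q) (m q : nat).
have E2 : \sum_(q in Q) \sum_(q' in Q | q' != q) [&& h q.1 == h q.2, h q'.1 == h q'.2 & true]
   = \sum_(q in Q) (m q * (k - m q))%N.
  apply: eq_bigr => q qQ.
  have -> : k = (m q + \sum_(q' in Q | q' != q) (m q' : nat))%N by rewrite /k (bigD1 q qQ).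
  rewrite addKn big_distrr /=.
  apply: eq_bigr => q' _; rewrite /m.
  by case: (h q.1 == h q.2); case: (h q'.1 == h q'.2).
rewrite E1 E2.
have E3 : (k + \sum_(q in Q) (m q * (k - m q)))%N = (k * k)%N.
  rewrite /k big_distrl /= -big_split /=; apply: eq_bigr => q qQ.
  have : (m q <= k)%N by rewrite /k (bigD1 q qQ) leq_addr.
  by apply: bk.
have Hk : @okB _ (Kn n) Q h = (k == 0%N).
  rewrite /okB /k sum_nat_eq0; apply/forall_inP/forall_inP => H q qQ.
    by have := H q qQ; rewrite /m /=; case: (h q.1 == h q.2).
  by have := H q qQ; rewrite /m /=; case: (h q.1 == h q.2).
rewrite Hk; move: E3; set S2 := (\sum_(q in Q) (m q * (k - m q))%N) => E3.
rewrite -/k.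
clearbody S2 k; clear -E3.
case: (eqVneq k 0%N) => [->|kn] /=; first by [].
nia.
Qed.

End Counting.


Section Bounds.
Variable X : finType.
Implicit Types A B Q : {set X * X}.

Definition proper A B := forall q, q \in B -> ~~ conn A q.1 q.2.
Definition reduced A B := forall q q', q \in B -> q' \in B -> q != q' -> ~~ conn (q' |: A) q.1 q.2.

Lemma proper_sub A B B' : B' \subset B -> proper A B -> proper A B'.
Proof. by move=> s pr q qB; apply: pr; exact: (subsetP s). Qed.
Lemma reduced_sub A B B' : B' \subset B -> reduced A B -> reduced A B'.
Proof. by move=> s r q q' qB q'B; apply: r; exact: (subsetP s). Qed.

Lemma cnt_cross' (G : graph) A q : ~~ conn A q.1 q.2 ->
  (cnt (q |: A) set0 G * #|G|)%N = cnt A set0 G.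
Proof. by case: q => u v; exact: cnt_cross. Qed.

Variable n : nat.
Notation Z S := (cnt S set0 (Kn n)).
Lemma cKn : #|Kn n| = n. Proof. exact: card_ord. Qed.

Lemma crossn A q : ~~ conn A q.1 q.2 -> (n * Z (q |: A))%N = Z A.
Proof. by move=> c; rewrite mulnC -[X in (_ * X)%N]cKn cnt_cross'. Qed.

Lemma lowb A Q : proper A Q ->
  (n * Z A <= n * cnt A Q (Kn n) + #|Q| * Z A)%N.
Proof.
move=> pr; have U := union_bound n A Q.
have := leq_mul (leqnn n) U; rewrite mulnDr big_distrr /=.
by rewrite (eq_bigr (fun _ => Z A)) ?sum_nat_const // => q qQ; rewrite crossn // pr.
Qed.

Lemma upb A Q : proper A Q -> reduced A Q ->
  (n * n * cnt A Q (Kn n) + n * #|Q| * Z A <= n * n * Z A + #|Q| * (#|Q| - 1) * Z A)%N.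
Proof.
move=> pr rd; have U := bonferroni n A Q.
have := leq_mul (leqnn (n * n)) U; rewrite !mulnDr !big_distrr /=.
rewrite (eq_bigr (fun _ => n * Z A)%N); last first.
  by move=> q qQ; rewrite -mulnA crossn // pr.
rewrite sum_nat_const.
rewrite [X in (_ <= _ + X)%N](eq_bigr (fun _ => (#|Q| - 1) * Z A)%N); last first.
  move=> q qQ; rewrite big_distrr /=.
  rewrite (eq_bigr (fun _ => Z A)); last first.
    move=> q' /andP[q'Q ne]; rewrite -mulnA crossn; last by apply: rd; rewrite // eq_sym.
    by rewrite crossn // pr.
  rewrite (eq_bigl (fun q' => q' \in Q :\ q)); last by move=> q'; rewrite !inE andbC.
  by rewrite sum_nat_const (cardsD1 q Q) qQ add1n subn1.
rewrite sum_nat_const.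
by rewrite !mulnA [(n * #|Q|)%N]mulnC.
Qed.

End Bounds.


Section Classes.
Variable EQ : graph -> graph -> Prop.
Hypothesis EQ_compl : forall G H, simple G -> simple H -> EQ G H -> EQ (compl G) (compl H).
Hypothesis EQ_pg : forall G H K, simple G -> simple H -> simple K -> EQ G H -> EQ (pg G K) (pg H K).
Definition Inv (f : graph -> nat) := forall G H, simple G -> simple H -> EQ G H -> f G = f H.

Variable X : finType.
Local Open Scope ring_scope.
Implicit Types A B Q : {set X * X}.

Lemma class_lemma A B (t0 : {ffun X * X -> 'I_3}) :
  Inv (cnt A B) ->
  t0 \in pffun_on ord0 (fun p => p \in B) predT ->
  (exists K, simple K /\ cnt (A :|: Pt t0 B) (Qt t0 B) K != 0%N) ->
  (forall t, t \in pffun_on ord0 (fun p => p \in B) predT ->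
     (forall K, simple K -> cnt (A :|: Pt t B) (Qt t B) K = cnt (A :|: Pt t0 B) (Qt t0 B) K) ->
     (#|Pt t B| + #|Qt t B| = #|Pt t0 B| + #|Qt t0 B|)%N) ->
  Inv (cnt (A :|: Pt t0 B) (Qt t0 B)).
Proof.
move=> IAB Pt0 [K0 [sK0 nz]] Hsign G H sG sH EGH.
pose psi t (K : graph) : int := (cnt (A :|: Pt t B) (Qt t B) K)%:R.
pose sg t : int := (-1) ^+ (#|Pt t B| + #|Qt t B|).
pose a t := sg t * (psi t G - psi t H).
have mul : forall t (G K : graph), simple G -> simple K -> psi t (pg G K) = psi t G * psi t K.
  by move=> t G' K' _ _; rewrite /psi cnt_mul natrM.
have Ha : forall K, simple K ->
    \sum_(t | t \in pffun_on ord0 (fun p => p \in B) predT) a t * psi t K = 0.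
  move=> K sK.
  have e := IAB _ _ (@compl_simple (pg G K)) (@compl_simple (pg H K))
     (EQ_compl (@pg_simple G K sG) (@pg_simple H K sH) (EQ_pg sG sH sK EGH)).
  have := congr1 (fun x : nat => x%:R : int) e.
  rewrite (cnt_compl A B (@pg_simple G K sG)) (cnt_compl A B (@pg_simple H K sH)) => E.
  move/eqP: E; rewrite -subr_eq0 -sumrB; move/eqP => E2; apply: etrans _ E2.
  apply: eq_bigr => t _; rewrite /a -/(psi t (pg G K)) -/(psi t (pg H K)) !mul //.
  by rewrite /sg mulrBr mulrBl !mulrA.
have := artin mul Ha Pt0.
have nz' : exists K, simple K /\ psi t0 K != 0.
  by exists K0; split => //; rewrite /psi pnatr_eq0.
move=> /(_ nz').
rewrite (eq_bigr (fun _ => a t0)); last first.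
  move=> t /andP[Ptt /pdecP s]; rewrite /a /sg Hsign // ?s //.
  by move=> K sK; have := s K sK; rewrite /psi => /eqP; rewrite eqr_nat => /eqP.
rewrite sumr_const => /eqP; rewrite mulrn_eq0 => /orP[|].
  move=> /eqP /card0_eq /(_ t0); rewrite [in X in X = _ -> _]unfold_in /= Pt0 /=.
  by have -> : same psi t0 t0 by apply/pdecP.
rewrite /a mulf_eq0 signr_eq0 /= subr_eq0 => /eqP.
by move/eqP; rewrite /psi eqr_nat => /eqP.
Qed.

End Classes.


Lemma ar1 n W T b : (0 < W)%N -> (1 <= b)%N -> (n * W <= n * T + (b - 1) * W)%N -> (n * T <= W)%N -> (b < n)%N -> False.
Proof. nia. Qed.
Lemma ar2 n W T b q : (0 < W)%N -> (n * W <= n * T + q * W)%N ->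
  (n * n * T + n * (b - 1) * W <= n * n * W + (b - 1) * (b - 1 - 1) * W)%N -> (q + 2 <= b)%N -> (b * b < n)%N -> False.
Proof.
move=> W0 h1 h2 hq hn.
have h3 : (n * (n * W) <= n * (n * T + q * W))%N by rewrite leq_mul2l h1 orbT.
have h4 : (n * (b - 1) * W <= (b - 1) * (b - 1 - 1) * W + n * q * W)%N.
  move: h2 h3; rewrite !mulnDr !mulnA; lia.
have h5 : (n * (q + 1) * W <= (b - 1) * (b - 1 - 1) * W + n * q * W)%N.
  apply: leq_trans h4; rewrite leq_mul2r leq_mul2l; apply/orP; right; apply/orP; right; lia.
have h6 : (n * W <= (b - 1) * (b - 1 - 1) * W)%N.
  move: h5; rewrite mulnDr mulnDl muln1 [((b - 1) * (b - 1 - 1) * W + _)%N]addnC leq_add2l.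
  by [].
have h7 : (n <= (b - 1) * (b - 1 - 1))%N by rewrite -(leq_pmul2r W0).
have : ((b - 1) * (b - 1 - 1) <= b * b)%N by apply: leq_mul; lia.
lia.
Qed.
Lemma ar3 n W T b : (0 < b)%N -> (0 < W)%N -> (n * n * T + n * b * W <= n * n * W + b * (b - 1) * W)%N ->
  (n * W <= n * T + (b - 1) * W)%N -> (b * b < n)%N -> False.
Proof.
move=> b0 W0 h1 h2 hn.
have h3 : (n * (n * W) <= n * (n * T + (b - 1) * W))%N by rewrite leq_mul2l h2 orbT.
case: b b0 h1 h2 hn h3 => [//|b] _ h1 h2 hn h3.
have h4 : (n * W <= b.+1 * b * W)%N.
  move: h1 h3; rewrite subSS subn0 !mulnDr !mulnA mulSn mulnS; lia.
have h7 : (n <= b.+1 * b)%N by rewrite -(leq_pmul2r W0).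
have : (b.+1 * b <= b.+1 * b.+1)%N by rewrite leq_mul2l leqnSn orbT.
lia.
Qed.
Lemma ar4 n W T b : (0 < W)%N -> (n * W <= n * T + b * W)%N -> (n * T <= W)%N -> (b.+1 < n)%N -> False.
Proof. nia. Qed.
Lemma ar5 n W b : (0 < W)%N -> (n * W <= (b - 1) * W)%N -> (b < n)%N -> False.
Proof. move=> W0; rewrite leq_pmul2r //; lia. Qed.

Definition c1 : 'I_3 := Ordinal (isT : (1 < 3)%N).
Definition c2 : 'I_3 := Ordinal (isT : (2 < 3)%N).

Section Steps.
Variable EQ : graph -> graph -> Prop.
Hypothesis EQ_compl : forall G H, simple G -> simple H -> EQ G H -> EQ (compl G) (compl H).
Hypothesis EQ_pg : forall G H K, simple G -> simple H -> simple K -> EQ G H -> EQ (pg G K) (pg H K).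
Variable X : finType.
Implicit Types A B Q : {set X * X}.

Lemma in_fam B (t : {ffun X * X -> 'I_3}) : (forall p, p \notin B -> t p = ord0) ->
  t \in pffun_on ord0 (fun p => p \in B) predT.
Proof.
move=> H; apply/pffun_onP; split => //.
apply/subsetP => p; rewrite inE; apply: contraR => pB; rewrite H //.
Qed.

Lemma Pt_sub t B : Pt t B \subset B.
Proof. by apply/subsetP => p; rewrite inE => /andP[]. Qed.
Lemma Qt_sub t B : Qt t B \subset B.
Proof. by apply/subsetP => p; rewrite inE => /andP[]. Qed.
Lemma PQ_disj t B p : p \in Pt t B -> p \notin Qt t B.
Proof. by rewrite !inE => /andP[_ /eqP ->]; rewrite andbF. Qed.

Notation Z n S := (cnt S set0 (Kn n)).

Lemma del_step A B e : proper A B -> reduced A B -> e \in B ->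
  Inv EQ (cnt A B) -> Inv EQ (cnt A (B :\ e)).
Proof.
move=> pr rd eB IAB.
pose t0 : {ffun X * X -> 'I_3} := [ffun p => if p \in B :\ e then c2 else ord0].
have P0 : Pt t0 B = set0.
  by apply/setP => p; rewrite !inE ffunE; case: ifP => _ /=; rewrite andbF.
have Q0 : Qt t0 B = B :\ e.
  apply/setP => p; rewrite !inE ffunE !inE.
  by case: (p \in B); case: (p == e); rewrite ?andbF ?andbT.
suff : Inv EQ (cnt (A :|: Pt t0 B) (Qt t0 B)) by rewrite P0 Q0 setU0.
set b := #|B|; set n := (b * b + 2)%N.
have n0 : (0 < n)%N by rewrite /n addn2.
have b0 : (0 < b)%N by apply/card_gt0P; exists e.
have cBe : #|B :\ e| = (b - 1)%N by rewrite /b (cardsD1 e B) eB add1n subn1.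
have prt : proper A (B :\ e) by apply: proper_sub pr; exact: subD1set.
have rdt : reduced A (B :\ e) by apply: reduced_sub rd; exact: subD1set.
have W0 : (0 < Z n A)%N by apply: cnt_pos.
have lowt := lowb n prt; have upt := upb n prt rdt.
rewrite cBe in lowt upt.
apply: (class_lemma EQ_compl EQ_pg) => //.
- by apply: in_fam => p; rewrite ffunE; case: ifP => // /setD1P[_ ->].
- exists (Kn n); split; first exact: Kn_simple.
  rewrite P0 Q0 setU0; apply/eqP => T0; rewrite T0 muln0 add0n in lowt.
  by apply: (ar5 W0 lowt); rewrite /n; lia.
move=> t tF Heq; rewrite P0 Q0 cards0 cBe add0n.
have Tn := Heq (Kn n) (@Kn_simple n); rewrite P0 Q0 setU0 in Tn.
case: (set_0Vmem (Pt t B)) => [Pe|[f fP]].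
  rewrite Pe cards0 add0n; rewrite Pe setU0 in Tn.
  have prQ : proper A (Qt t B) by apply: proper_sub pr; exact: Qt_sub.
  have lowQ := lowb n prQ; rewrite Tn in lowQ.
  have QB : (#|Qt t B| <= b)%N by apply: subset_leq_card; exact: Qt_sub.
  case: (leqP (#|Qt t B| + 2) b) => [hq|hq].
    exfalso; apply: (ar2 W0 lowQ upt hq); rewrite /n; lia.
  case: (eqVneq #|Qt t B| b) => [hb|hb]; last by lia.
  exfalso.
  have QeB : Qt t B = B.
    by apply/eqP; rewrite eqEcard Qt_sub hb leqnn.
  have upQ := upb n pr rd; rewrite QeB in Tn; rewrite Tn -/b in upQ.
  by apply: (ar3 b0 W0 upQ lowt); rewrite /n; lia.
exfalso.
have fB : f \in B by move: fP; rewrite inE => /andP[].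
have h1 : (cnt A (B :\ e) (Kn n) <= Z n (f |: A))%N.
  rewrite -Tn; apply: cnt_mono; last exact: sub0set.
  by apply/subsetP => p; rewrite in_setU1 => /orP[/eqP ->|pA]; rewrite in_setU ?fP ?pA ?orbT.
have h2 : (n * Z n (f |: A))%N = Z n A by apply: crossn; apply: pr.
have h3 : (n * cnt A (B :\ e) (Kn n) <= Z n A)%N by rewrite -h2 leq_mul2l h1 orbT.
by apply: (ar1 W0 b0 lowt h3); rewrite /n; lia.
Qed.

Lemma con_step A B e : proper A B -> reduced A B -> e \in B ->
  reduced (e |: A) (B :\ e) ->
  Inv EQ (cnt A B) -> Inv EQ (cnt (e |: A) (B :\ e)).
Proof.
move=> pr rd eB rdt IAB.
pose t0 : {ffun X * X -> 'I_3} :=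
  [ffun p => if p == e then c1 else if p \in B then c2 else ord0].
have P0 : Pt t0 B = [set e].
  apply/setP => p; rewrite !inE ffunE.
  by case: (eqVneq p e) => [->|pe] /=; rewrite ?eB //; case: ifP => _; rewrite ?andbF.
have Q0 : Qt t0 B = B :\ e.
  apply/setP => p; rewrite !inE ffunE.
  by case: (eqVneq p e) => [->|pe] /=; rewrite ?andbF //; case: (p \in B).
suff : Inv EQ (cnt (A :|: Pt t0 B) (Qt t0 B)) by rewrite P0 Q0 setUC.
set b := #|B|; set n := (b * b + 2)%N.
have n0 : (0 < n)%N by rewrite /n addn2.
have b0 : (0 < b)%N by apply/card_gt0P; exists e.
have cBe : #|B :\ e| = (b - 1)%N by rewrite /b (cardsD1 e B) eB add1n subn1.
have prt : proper (e |: A) (B :\ e).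
  move=> q; rewrite in_setD1 => /andP[qe qB]; exact: rd.
have hW : (n * Z n (e |: A))%N = Z n A by apply: crossn; apply: pr.
have W0 : (0 < Z n (e |: A))%N by apply: cnt_pos.
have lowt := lowb n prt; have upt := upb n prt rdt.
rewrite cBe in lowt upt.
set T := cnt (e |: A) (B :\ e) (Kn n) in lowt upt.
apply: (class_lemma EQ_compl EQ_pg) => //.
- apply: in_fam => p pB; rewrite ffunE (negbTE pB).
  by case: (eqVneq p e) => // pe; rewrite pe eB in pB.
- exists (Kn n); split; first exact: Kn_simple.
  rewrite P0 Q0 setUC; apply/eqP => T0; rewrite /T T0 muln0 add0n in lowt.
  by apply: (ar5 W0 lowt); rewrite /n; lia.
move=> t tF Heq; rewrite P0 Q0 cards1 cBe.
have Tn := Heq (Kn n) (@Kn_simple n); rewrite P0 Q0 (setUC A [set e]) -/T in Tn.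
have TW : (n * T <= Z n A)%N.
  rewrite -hW leq_mul2l; apply/orP; right; apply: cnt_mono => //; exact: sub0set.
case: (ltngtP #|Pt t B| 1) => hP.
- exfalso.
  have Pe : Pt t B = set0 by apply/eqP; rewrite -cards_eq0; lia.
  rewrite Pe setU0 in Tn.
  have prQ : proper A (Qt t B) by apply: proper_sub pr; exact: Qt_sub.
  have lowQ := lowb n prQ; rewrite Tn in lowQ.
  have QB : (#|Qt t B| <= b)%N by apply: subset_leq_card; exact: Qt_sub.
  have lowQ' : (n * Z n A <= n * T + b * Z n A)%N.
    by apply: leq_trans lowQ _; rewrite leq_add2l leq_mul2r QB orbT.
  have Wp : (0 < Z n A)%N by apply: cnt_pos.
  by apply: (ar4 Wp lowQ' TW); rewrite /n; lia.
- exfalso.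
  have [f [g [fP gP fg]]] := card_gt1P hP.
  have fB : f \in B by apply: (subsetP (Pt_sub t B)).
  have gB : g \in B by apply: (subsetP (Pt_sub t B)).
  have h1 : (T <= Z n (f |: (g |: A)))%N.
    rewrite -Tn; apply: cnt_mono; last exact: sub0set.
    apply/subsetP => p; rewrite !in_setU1 => /orP[/eqP ->|/orP[/eqP ->|pA]];
      by rewrite in_setU ?fP ?gP ?pA ?orbT.
  have h2 : (n * Z n (f |: (g |: A)))%N = Z n (g |: A) by apply: crossn; apply: rd.
  have h3 : (n * Z n (g |: A))%N = Z n A by apply: crossn; apply: pr.
  have h4 : (n * (n * T) <= n * Z n (e |: A))%N.
    by rewrite hW -h3 -h2 !leq_mul2l h1 !orbT.
  have h5 : (n * T <= Z n (e |: A))%N by rewrite -(leq_pmul2l n0).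
  by apply: (ar1 W0 b0 lowt h5); rewrite /n; lia.
have /cards1P [f Pf] : #|Pt t B| == 1%N by apply/eqP.
have fP : f \in Pt t B by rewrite Pf set11.
have fB : f \in B by apply: (subsetP (Pt_sub t B)).
rewrite Pf (setUC A [set f]) in Tn.
have hWf : (n * Z n (f |: A))%N = Z n A by apply: crossn; apply: pr.
have Wf : Z n (f |: A) = Z n (e |: A).
  by apply/eqP; rewrite -(eqn_pmul2l n0) hWf hW.
have QBf : Qt t B \subset B :\ f.
  apply/subsetP => q qQ; rewrite in_setD1 (subsetP (Qt_sub t B) q qQ) andbT.
  by apply: contraNneq (PQ_disj fP) => <-.
have cBf : #|B :\ f| = (b - 1)%N by rewrite /b (cardsD1 f B) fB add1n subn1.
have Qle : (#|Qt t B| <= b - 1)%N by rewrite -cBf; apply: subset_leq_card.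
case: (boolP [exists q in Qt t B, conn (f |: A) q.1 q.2]) => [/exists_inP [q qQ cq]|nc].
  exfalso; have := cnt_loop n qQ cq; rewrite Tn => T0.
  rewrite T0 muln0 add0n in lowt.
  by apply: (ar5 W0 lowt); rewrite /n; lia.
have prQ : proper (f |: A) (Qt t B).
  by move=> q qQ; apply: contra nc => cq; apply/exists_inP; exists q.
have lowQ := lowb n prQ; rewrite Tn Wf in lowQ.
case: (leqP (#|Qt t B| + 2) b) => [hq|hq].
  by exfalso; apply: (ar2 W0 lowQ upt hq); rewrite /n; lia.
congr (_ + _)%N; lia.
Qed.

End Steps.


Section ConnLemmas.
Variable X : finType.
Implicit Types A B S : {set X * X}.

Lemma conn_mono S S' x y : S \subset S' -> conn S x y -> conn S' x y.
Proof.
move=> sS; apply: connect_sub => a b /orP[] E; apply: connect1; rewrite /rA.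
  by rewrite (subsetP sS _ E).
by rewrite (subsetP sS _ E) orbT.
Qed.

Lemma conn_set0 x y : conn (set0 : {set X * X}) x y -> x = y.
Proof.
move=> /connectP[p]; case: p => [_ //|z p] /=.
by rewrite /rA !inE.
Qed.

Lemma conn_U1 A q x y : conn (q |: A) x y ->
  [|| conn A x y, conn A x q.1 && conn A q.2 y | conn A x q.2 && conn A q.1 y].
Proof.
move=> /connectP[p pth ->] {y}; elim: p x pth => [|z p IH] x /=.
  by rewrite conn0.
case/andP => xz /IH {IH}.
set y := last z p.
have step : forall a b, conn A a b ->
   [|| conn A b y, conn A b q.1 && conn A q.2 y | conn A b q.2 && conn A q.1 y] ->
   [|| conn A a y, conn A a q.1 && conn A q.2 y | conn A a q.2 && conn A q.1 y].
  move=> a b ab /or3P[hby|/andP[b1 y2]|/andP[b2 y1]].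
  - by rewrite (conn_trans ab hby).
  - by rewrite (conn_trans ab b1) y2 orbT.
  - by rewrite (conn_trans ab b2) y1 !orbT.
have sx : (x, z) \in A \/ (z, x) \in A \/ (x, z) = q \/ (z, x) = q.
  move: xz; rewrite /rA !in_setU1 => /orP[/orP[/eqP E|E]|/orP[/eqP E|E]]; tauto.
case: sx => [E|[E|[E|E]]].
- by apply: step; apply: connect1; rewrite /rA E.
- by apply: step; apply: connect1; rewrite /rA E orbT.
- rewrite -E /= => /or3P[zy|/andP[z1 y2]|/andP[z2 y1]].
  + by rewrite conn0 zy orbT.
  + by rewrite conn0 y2 orbT.
  + by rewrite y1.
- rewrite -E /= => /or3P[zy|/andP[z1 y2]|/andP[z2 y1]].
  + by apply/or3P; apply: Or33; rewrite conn0 zy.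
  + by rewrite y2.
  + by rewrite (conn_trans _ y1) // conn_sym.
Qed.

Lemma conn_label (T : eqType) (lab : X -> T) S x y :
  (forall p, p \in S -> lab p.1 = lab p.2) -> conn S x y -> lab x = lab y.
Proof.
move=> H /connectP[p pth ->] {y}; elim: p x pth => //= z p IH x /andP[xz /IH <-].
by case/orP: xz => /H.
Qed.

End ConnLemmas.


Section Plan.
Variable EQ : graph -> graph -> Prop.
Hypothesis EQ_compl : forall G H, simple G -> simple H -> EQ G H -> EQ (compl G) (compl H).
Hypothesis EQ_pg : forall G H K, simple G -> simple H -> simple K -> EQ G H -> EQ (pg G K) (pg H K).
Variables F F' : graph.
Hypothesis sF : simple F.
Hypothesis sF' : simple F'.
Variable phi : F -> option F'.
Hypothesis ph1 : forall v : F', exists x : F, phi x == Some v.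
Hypothesis ph2 : forall (v : F') (x y : F), phi x == Some v -> phi y == Some v ->
  connect [rel a b | [&& gE a b, phi a == Some v & phi b == Some v]] x y.
Hypothesis ph3 : forall v w : F', gE v w ->
  exists x y : F, [&& phi x == Some v, phi y == Some w & gE x y].

Definition Eh : {set F * F} := [set p | gE p.1 p.2 && (enum_rank p.1 < enum_rank p.2)%N].

Lemma Eh_edge p : p \in Eh -> gE p.1 p.2.
Proof. by rewrite inE => /andP[]. Qed.

Lemma Eh_neq p : p \in Eh -> p.1 != p.2.
Proof. by move/Eh_edge; apply: contraTneq => ->; exact: sF. Qed.

Lemma Eh_orient x y : gE x y -> ((x, y) \in Eh) || ((y, x) \in Eh).
Proof.
move=> xy; rewrite !inE /= xy gE_sym xy /=.
case: (ltngtP (enum_rank x) (enum_rank y)) => // /val_inj /enum_rank_inj exy.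
by move: xy; rewrite exy (negbTE (sF y)).
Qed.

Lemma hom_Eh (G : graph) : hom F G = cnt set0 Eh G.
Proof.
rewrite hom_cnt /cnt; apply: eq_card => h; rewrite !inE; congr (_ && _).
apply/forall_inP/forall_inP => H p pE.
  by apply: H; rewrite inE; exact: Eh_edge.
move: pE; rewrite inE => /Eh_orient /orP[] pE.
  by case: p pE => x y pE; exact: H.
by have := H _ pE; rewrite gE_sym.
Qed.

Lemma proper_Eh (B : {set F * F}) : B \subset Eh -> proper set0 B.
Proof.
move=> sB q qB; apply/negP => /conn_set0 e.
by have := Eh_neq (subsetP sB q qB); rewrite e eqxx.
Qed.

Lemma reduced_Eh (B : {set F * F}) : B \subset Eh -> reduced set0 B.
Proof.
move=> sB q q' qB q'B qq'; apply/negP => /conn_U1 /or3P[].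
- by apply/negP; apply: proper_Eh qB.
- case/andP => /conn_set0 e1 /conn_set0 e2.
  by move: qq'; case: q q' e1 e2 {qB q'B} => a b [c d] /= -> ->; rewrite eqxx.
- case/andP => /conn_set0 e1 /conn_set0 e2.
  have h1 := subsetP sB q qB; have h2 := subsetP sB q' q'B.
  move: h1 h2; rewrite !inE e1 -e2 => /andP[_ l1] /andP[_ l2].
  by move: (ltn_trans l1 l2); rewrite ltnn.
Qed.

Lemma phase1 : Inv EQ (hom F) -> forall B : {set F * F}, B \subset Eh -> Inv EQ (cnt set0 B).
Proof.
move=> IF.
suff H : forall k (B : {set F * F}), B \subset Eh -> #|Eh :\: B| = k -> Inv EQ (cnt set0 B).
  by move=> B sB; exact: (H _ B sB erefl).
elim=> [|k IH] B sB hk.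
  have -> : B = Eh.
    apply/eqP; rewrite eqEsubset sB /=; apply/subsetP => p pE.
    apply: contraT => pB; move/eqP: hk; rewrite cards_eq0 => /eqP/setP/(_ p).
    by rewrite in_setD in_set0 pB pE.
  by move=> G H sG sH E; rewrite -!hom_Eh; exact: IF.
have [e eD] : exists e, e \in Eh :\: B.
  by apply/set0Pn; rewrite -cards_eq0 hk.
move: eD; rewrite in_setD => /andP[eB eE].
have sB' : e |: B \subset Eh by rewrite subUset sub1set eE sB.
have hk' : #|Eh :\: (e |: B)| = k.
  have : #|Eh :\: B| = (1 + #|Eh :\: (e |: B)|)%N.
    rewrite (cardsD1 e (Eh :\: B)) in_setD eB eE; congr (_ + _)%N.
    by apply: eq_card => p; rewrite in_setD1 !in_setD in_setU1 negb_or andbA.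
  by rewrite hk add1n => -[].
have I' := IH _ sB' hk'.
have := del_step EQ_compl EQ_pg (proper_Eh sB') (reduced_Eh sB') (setU11 e B) I'.
by rewrite setU1K.
Qed.

Definition Iset : {set F * F} := [set p in Eh | (phi p.1 == phi p.2) && (phi p.1 != None)].
Definition PT (T : {set F * F}) :=
  (T \subset Iset) && [forall x, forall y, conn Iset x y ==> conn T x y].

Lemma PT_I : PT Iset.
Proof. by rewrite /PT subxx; apply/forallP => x; apply/forallP => y; apply/implyP. Qed.

Definition Tf := [arg min_(T < Iset | PT T) #|T|].

Lemma Tf_spec : PT Tf /\ forall T, PT T -> (#|Tf| <= #|T|)%N.
Proof. by rewrite /Tf; case: arg_minnP => [|T PTT H]; [exact: PT_I | split]. Qed.

Lemma Tf_sub : Tf \subset Iset.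
Proof. by case: Tf_spec => /andP[]. Qed.

Lemma Tf_conn x y : conn Iset x y -> conn Tf x y.
Proof. by case: Tf_spec => /andP[_ /forallP /(_ x) /forallP /(_ y) /implyP]. Qed.

Lemma lab_I p : p \in Iset -> phi p.1 = phi p.2.
Proof. by rewrite inE => /andP[_ /andP[/eqP]]. Qed.

Lemma conn_branch (S : {set F * F}) x y : S \subset Iset -> conn S x y -> phi x = phi y.
Proof. by move=> sS; apply: conn_label => p /(subsetP sS) /lab_I. Qed.

Lemma Tf_forest g : g \in Tf -> ~~ conn (Tf :\ g) g.1 g.2.
Proof.
move=> gT; apply/negP => cg.
have PT' : PT (Tf :\ g).
  rewrite /PT (subset_trans (subD1set Tf g) Tf_sub) /=.
  apply/forallP => x; apply/forallP => y; apply/implyP => /Tf_conn.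
  rewrite -{1}(setD1K gT) => /conn_U1 /or3P[//|/andP[x1 y2]|/andP[x2 y1]].
    exact: conn_trans (conn_trans x1 cg) y2.
  by apply: conn_trans (conn_trans x2 _) y1; rewrite conn_sym.
have := (proj2 Tf_spec) _ PT'; rewrite (cardsD1 g Tf) gT add1n ltnn.
by [].
Qed.

Lemma branch_conn x y v : phi x = Some v -> phi y = Some v -> conn Tf x y.
Proof.
move=> xv yv; apply: Tf_conn.
have := ph2 (introT eqP xv) (introT eqP yv); apply: connect_sub => a b /=.
case/and3P => ab /eqP av /eqP bv; apply: connect1.
have inI : forall p, p \in Eh -> phi p.1 = Some v -> phi p.2 = Some v -> p \in Iset.
  by move=> p pE e1 e2; rewrite inE pE e1 e2 eqxx.
case/orP: (Eh_orient ab) => E; rewrite /rA.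
  by rewrite (inI (a, b) E av bv).
by rewrite (inI (b, a) E bv av) orbT.
Qed.

Definition rep (v w : F') : option (F * F) :=
  [pick p in Eh | ((phi p.1 == Some v) && (phi p.2 == Some w)) ||
                  ((phi p.1 == Some w) && (phi p.2 == Some v))].
Definition Rset : {set F * F} := [set p | [exists v, exists w, gE v w && (rep v w == Some p)]].

Lemma rep_sym v w : rep v w = rep w v.
Proof. by apply: eq_pick => p; rewrite [X in _ && X]orbC. Qed.

Lemma Rset_spec p : p \in Rset -> exists v w, [/\ gE v w, p \in Eh, rep v w = Some p &
   ((phi p.1 == Some v) && (phi p.2 == Some w)) || ((phi p.1 == Some w) && (phi p.2 == Some v))].
Proof.
rewrite /Rset inE => /existsP[v /existsP[w /andP[vw /eqP r]]]; exists v, w.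
move: r; rewrite /rep; case: pickP => // q /andP[qE c] [<-]; by split.
Qed.

Lemma R_sub : Rset \subset Eh.
Proof. by apply/subsetP => p /Rset_spec [v [w []]]. Qed.

Lemma R_some p : p \in Rset -> exists a b, [/\ phi p.1 = Some a, phi p.2 = Some b & gE a b].
Proof.
move/Rset_spec => [v [w [vw _ _ /orP[] /andP[/eqP e1 /eqP e2]]]].
  by exists v, w.
by exists w, v; rewrite gE_sym.
Qed.

Lemma R_cross p : p \in Rset -> phi p.1 != phi p.2.
Proof.
move/R_some => [a [b [-> -> ab]]]; apply/negP => /eqP [eab].
by move: ab; rewrite eab (negbTE (sF' b)).
Qed.

Lemma rep_of p a b : p \in Rset -> phi p.1 = Some a -> phi p.2 = Some b -> rep a b = Some p.
Proof.
move=> pR pa pb; have [v [w [vw _ r c]]] := Rset_spec pR; rewrite pa pb in c.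
by case/orP: c => /andP[/eqP [ea] /eqP [eb]]; rewrite ea eb // rep_sym.
Qed.

Lemma R_uniq p q : p \in Rset -> q \in Rset ->
  ((phi p.1 == phi q.1) && (phi p.2 == phi q.2)) ||
  ((phi p.1 == phi q.2) && (phi p.2 == phi q.1)) -> p = q.
Proof.
move=> pR qR H; have [a [b [pa pb _]]] := R_some pR.
have rp := rep_of pR pa pb.
case/orP: H => /andP[/eqP e1 /eqP e2].
  by move: rp; rewrite (rep_of qR (esym (etrans (esym pa) e1)) (esym (etrans (esym pb) e2))) => -[].
move: rp; rewrite rep_sym (rep_of qR (esym (etrans (esym pb) e2)) (esym (etrans (esym pa) e1))).
by case.
Qed.

Lemma R_exists v w : gE v w -> exists2 p, p \in Rset &
  ((phi p.1 == Some v) && (phi p.2 == Some w)) || ((phi p.1 == Some w) && (phi p.2 == Some v)).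
Proof.
move=> vw; have [x [y /and3P[xv yw xy]]] := ph3 vw.
case E: (rep v w) => [p|]; last first.
  move: E; rewrite /rep; case: pickP => // H0 _.
  case/orP: (Eh_orient xy) => H.
    by have := H0 (x, y); rewrite /= H xv yw.
  by have := H0 (y, x); rewrite /= H xv yw orbT.
exists p.
  rewrite /Rset inE; apply/existsP; exists v; apply/existsP; exists w.
  by rewrite E eqxx andbT.
by move: E; rewrite /rep; case: pickP => // q /andP[_ c] [<-].
Qed.

Lemma T_notR e : e \in Tf -> e \notin Rset.
Proof.
move=> eT; apply/negP => /R_cross; rewrite (lab_I (subsetP Tf_sub e eT)).
by rewrite eqxx.
Qed.

Definition BA (A : {set F * F}) := (Tf :\: A) :|: Rset.

Lemma state_ok (A : {set F * F}) : A \subset Tf -> proper A (BA A) /\ reduced A (BA A).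
Proof.
move=> sA.
have sAI : A \subset Iset := subset_trans sA Tf_sub.
have prT : forall q, q \in Tf :\: A -> ~~ conn A q.1 q.2.
  move=> q; rewrite in_setD => /andP[qA qT]; apply: contra (Tf_forest qT).
  apply: conn_mono; apply/subsetP => p pA; rewrite in_setD1 (subsetP sA p pA) andbT.
  by apply: contraNneq qA => <-.
have prR : forall q, q \in Rset -> ~~ conn A q.1 q.2.
  by move=> q qR; apply: contra (R_cross qR) => /(conn_branch sAI) ->.
have pr : proper A (BA A).
  by move=> q; rewrite in_setU => /orP[/prT|/prR].
split => // q q'; rewrite !in_setU => qB q'B qq'.
case/orP: q'B => q'B.
- move: q'B; rewrite in_setD => /andP[q'A q'T].
  case/orP: qB => qB.
  + move: (qB); rewrite in_setD => /andP[qA qT].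
    apply: contra (Tf_forest qT); apply: conn_mono.
    apply/subsetP => p; rewrite in_setU1 => /orP[/eqP ->|pA].
      by rewrite in_setD1 q'T andbT eq_sym.
    rewrite in_setD1 (subsetP sA p pA) andbT.
    by apply: contraNneq qA => <-.
  + have sub : q' |: A \subset Iset by rewrite subUset sub1set (subsetP Tf_sub _ q'T) sAI.
    by apply: contra (R_cross qB) => /(conn_branch sub) ->.
- apply/negP => /conn_U1 /or3P[].
  + by apply/negP; apply: pr; rewrite in_setU qB.
  + case/andP => /(conn_branch sAI) e1 /(conn_branch sAI) e2.
    case/orP: qB => qB.
      move: qB; rewrite in_setD => /andP[_ qT].
      have := R_cross q'B; rewrite -e1 e2 (lab_I (subsetP Tf_sub q qT)).
      by rewrite eqxx.
    have eqq : q = q'.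
      by apply: R_uniq => //; apply/orP; left; apply/andP; split; apply/eqP; [exact: e1|exact: (esym e2)].
    by rewrite eqq eqxx in qq'.
  + case/andP => /(conn_branch sAI) e1 /(conn_branch sAI) e2.
    case/orP: qB => qB.
      move: qB; rewrite in_setD => /andP[_ qT].
      have := R_cross q'B; rewrite e2 -e1 (lab_I (subsetP Tf_sub q qT)).
      by rewrite eqxx.
    have eqq : q = q'.
      by apply: R_uniq => //; apply/orP; right; apply/andP; split; apply/eqP; [exact: e1|exact: (esym e2)].
    by rewrite eqq eqxx in qq'.
Qed.

Lemma BA_step (A : {set F * F}) e : e \in A -> A \subset Tf -> BA (A :\ e) :\ e = BA A.
Proof.
move=> eA sA; apply/setP => p; rewrite /BA !inE.
case: (eqVneq p e) => [->|pe] /=.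
  have nR := T_notR (subsetP sA e eA); rewrite /Rset inE in nR.
  by rewrite eA /= (negbTE nR).
by [].
Qed.

Lemma phase2 : Inv EQ (hom F) -> forall A : {set F * F}, A \subset Tf -> Inv EQ (cnt A (BA A)).
Proof.
move=> IF.
suff H : forall k (A : {set F * F}), A \subset Tf -> #|A| = k -> Inv EQ (cnt A (BA A)).
  by move=> A sA; exact: (H _ A sA erefl).
elim=> [|k IH] A sA hk.
  have -> : A = set0 by apply/eqP; rewrite -cards_eq0 hk.
  apply: phase1 => //; rewrite /BA setD0 subUset R_sub andbT.
  by apply: subset_trans Tf_sub _; apply/subsetP => p; rewrite inE => /andP[].
have [e eA] : exists e, e \in A by apply/card_gt0P; rewrite hk.
have sA' : A :\ e \subset Tf by apply: subset_trans (subD1set A e) sA.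
have hk' : #|A :\ e| = k by move: hk; rewrite (cardsD1 e A) eA add1n => -[].
have I' := IH _ sA' hk'.
have [pr rd] := state_ok sA'.
have eB : e \in BA (A :\ e).
  by rewrite /BA in_setU in_setD in_setD1 eqxx /= (subsetP sA e eA).
have [_ rdt] := state_ok sA.
rewrite -(BA_step eA sA) -{1}(setD1K eA) in rdt.
have := con_step EQ_compl EQ_pg pr rd eB rdt I'.
by rewrite (setD1K eA) BA_step.
Qed.

Definition Dt := {x : F | phi x == None}.

Lemma final_count (G : graph) :
  cnt Tf Rset G = (hom F' G * #|G| ^ #|[set x : F | phi x == None]|)%N.
Proof.
have [xv Hxv] : exists xv : F' -> F, forall v, phi (xv v) = Some v.
  apply: (@fin_all_exists F' (fun _ => Finite.sort F) (fun v x => phi x = Some v)) => v.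
  by have [x /eqP] := ph1 v; exists x.
pose rho (h : {ffun F -> G}) : {ffun F' -> G} * {ffun Dt -> G} :=
  ([ffun v => h (xv v)], [ffun s : Dt => h (val s)]).
have constT : forall h : {ffun F -> G}, h \in cset G Tf Rset ->
    forall x v, phi x = Some v -> h x = h (xv v).
  move=> h; rewrite inE => /andP[hA _] x v xv'.
  by apply: (okA_conn hA); apply: branch_conn xv' (Hxv v).
have -> : (hom F' G * #|G| ^ #|[set x : F | phi x == None]|)%N =
          #|setX [set g : {ffun F' -> G} | homb g] [set: {ffun Dt -> G}]|.
  rewrite cardsX cardsT card_ffun card_sig; congr (_ * _ ^ _)%N.
    by apply: eq_card => g; rewrite !inE.
  by apply: eq_card => x; rewrite !inE.
rewrite /cnt -(@card_in_imset _ _ rho); last first.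
  move=> h1 h2 h1S h2S /= [/ffunP E1 /ffunP E2]; apply/ffunP => x.
  case E: (phi x) => [v|].
    rewrite (constT _ h1S x v E) (constT _ h2S x v E).
    by have := E1 v; rewrite !ffunE.
  have Ex : phi x == None by rewrite E.
  by have := E2 (exist _ x Ex); rewrite !ffunE.
apply: eq_card => -[g d]; rewrite inE /=; apply/imsetP/andP.
  move=> [h hS [-> ->]]; split; last by rewrite inE.
  rewrite inE; apply/forallP => u; apply/forallP => v; apply/implyP => uv.
  have [p pR c] := R_exists uv.
  have := hS; rewrite inE => /andP[_ /forall_inP /(_ p pR) hp].
  rewrite !ffunE.
  case/orP: c => /andP[/eqP e1 /eqP e2].
    by rewrite -(constT _ hS _ _ e1) -(constT _ hS _ _ e2).
  by rewrite gE_sym -(constT _ hS _ _ e1) -(constT _ hS _ _ e2).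
rewrite inE => -[hg _].
have [f Hf] : exists f : F -> G, forall x,
    (forall v, phi x = Some v -> f x = g v) /\ (forall s : Dt, val s = x -> f x = d s).
  apply: (@fin_all_exists F (fun _ => Finite.sort G)
    (fun x y => (forall v, phi x = Some v -> y = g v) /\ (forall s : Dt, val s = x -> y = d s))) => x.
  case E: (phi x) => [v|].
    exists (g v); split; first by move=> w [<-].
    by move=> s sx; have := valP s; rewrite sx E.
  have Ex : phi x == None by rewrite E.
  exists (d (exist _ x Ex)); split => // s sx.
  by congr (d _); apply: val_inj.
exists [ffun x => f x].
  rewrite inE; apply/andP; split.
    apply/forall_inP => p pT; rewrite !ffunE.
    have pI := subsetP Tf_sub p pT.
    move: (pI); rewrite inE => /andP[_ /andP[/eqP e12 ne]].
    case E: (phi p.1) ne => [v|] // _.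
    by rewrite ((Hf p.1).1 v E) ((Hf p.2).1 v); rewrite // -e12.
  apply/forall_inP => p pR; rewrite !ffunE.
  have [a [b [pa pb ab]]] := R_some pR.
  rewrite ((Hf p.1).1 a pa) ((Hf p.2).1 b pb).
  by have := forallP (forallP hg a) b; rewrite ab.
congr pair; apply/ffunP => z; rewrite !ffunE.
  by rewrite ((Hf (xv z)).1 z (Hxv z)).
by rewrite ((Hf (val z)).2 z).
Qed.

Lemma cnt00 (G : graph) : cnt (set0 : {set F * F}) set0 G = (#|G| ^ #|F|)%N.
Proof.
rewrite /cnt -card_ffun; apply: eq_card => h; rewrite !inE okB0 andbT.
by apply/forall_inP => p; rewrite inE.
Qed.

Lemma hom_empty (G : graph) : #|G| = 0%N -> hom F' G = (#|G| ^ #|F'|)%N.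
Proof.
move=> G0; rewrite /hom -card_ffun; apply: eq_card => g; rewrite !inE.
apply/forallP => u; have := card0_eq G0 (g u); by rewrite inE.
Qed.

Lemma minor_inv : Inv EQ (hom F) -> Inv EQ (hom F').
Proof.
move=> IF G H sG sH E.
have I2 := phase2 IF (subxx Tf).
rewrite /BA setDv set0U in I2.
have := I2 G H sG sH E; rewrite !final_count.
set d := #|[set x : F | phi x == None]|.
case: (eqVneq d 0%N) => [->|d0]; first by rewrite !expn0 !muln1.
have I0 := phase1 IF (sub0set Eh).
have := I0 G H sG sH E; rewrite !cnt00.
have F0 : (0 < #|F|)%N.
  have := subset_leq_card (subsetT [set x : F | phi x == None]).
  by rewrite cardsT -/d; move: d0; rewrite -lt0n; apply: leq_trans.
move/(expIn F0) => GH.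
case: (eqVneq #|G| 0%N) => [G0|Gn0].
  by rewrite (hom_empty G0) (hom_empty (etrans (esym GH) G0)) GH.
rewrite GH => /eqP; rewrite eqn_pmul2r; first by move/eqP.
by rewrite expn_gt0 lt0n -GH Gn0.
Qed.

End Plan.


Theorem theorem1 (L : Type) (models : graph -> L -> Prop)
  (Hinv : iso_invariant models)
  (Hsc : self_complementary models)
  (Hex : exists C : graph -> Prop,
      (forall F, C F -> simple F) /\
      (forall G H : graph, simple G -> simple H ->
         (hom_indist C G H <-> L_equiv models G H))) :
  exists C' : graph -> Prop,
    (forall F, C' F -> simple F) /\ minor_closed C' /\
    (forall G H : graph, simple G -> simple H ->
       (hom_indist C' G H <-> L_equiv models G H)).
Proof.
case: Hex => C [HC1 HC2].
pose EQ := hom_indist C.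
have EQ_compl : forall G H, simple G -> simple H -> EQ G H -> EQ (compl G) (compl H).
  move=> G H sG sH E; apply/(HC2 _ _ (@compl_simple G) (@compl_simple H)).
  by apply: Lequiv_compl => //; apply/(HC2 _ _ sG sH).
have EQ_pg : forall G H K, simple G -> simple H -> simple K -> EQ G H -> EQ (pg G K) (pg H K).
  by move=> G H K _ _ _; exact: hom_indist_pg.
exists (fun F => simple F /\ Inv EQ (hom F)).
split; first by move=> F [].
split.
  move=> F F' [sF IF] sF' [phi [h1 [h2 h3]]]; split => //.
  exact: (minor_inv EQ_compl EQ_pg sF sF' h1 h2 h3 IF).
move=> G H sG sH; split.
  move=> HI; apply/(HC2 _ _ sG sH) => F CF; apply: HI; split; first exact: HC1.
  by move=> G' H' _ _ E; exact: E.
move=> LE F [sF IF]; apply: IF => //; exact/(HC2 _ _ sG sH).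
Qed.
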